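(* Let $Y$ be a real normed linear space such that every non-zero approximately smooth element of $L(\ell_1^n,Y)$ is smooth. Then either $Y$ is smooth, or $Y$ is not approximately smooth.
   Context: $\ell_1^n$ is $\mathbb{R}^n$ with the $\ell_1$ norm; $L(\ell_1^n,Y)$ is the space of bounded linear operators with the operator norm. For a normed space $Z$ and $z\neq\theta$, $J(z)=\{\phi\in S_{Z^*}:\phi(z)=\|z\|\}$; $z$ is smooth if $J(z)$ is a singleton and $\varepsilon$-smooth if $\sup_{\phi,\psi\in J(z)}\|\phi-\psi\|\le\varepsilon$; an element is approximately smooth if it is $\varepsilon$-smooth for some $\varepsilon\in[0,2)$. The space $Z$ is smooth if every $z\in S_Z$ is smooth, and approximately smooth if there is $\varepsilon\in[0,2)$ such that every $z\in S_Z$ is $\varepsilon$-smooth. *)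

(* Defs.v *)
From HB Require Import structures.
From mathcomp Require Import all_boot all_order all_algebra.
From mathcomp Require Import all_classical all_reals all_analysis.
Set Implicit Arguments. Unset Strict Implicit. Unset Printing Implicit Defensive.
Import Order.TTheory GRing.Theory Num.Theory.
Import numFieldNormedType.Exports.
Local Open Scope classical_set_scope.
Local Open Scope ring_scope.

Section Smoothness.
Variables (R : realType) (V : lmodType R) (nrm : V -> R).

Definition fnorm (f : V -> R) : R :=
  sup [set `|f x| | x in [set x : V | nrm x <= 1]].

Definition is_dual (f : V -> R) : Prop :=
  (forall (a : R) (x y : V), f (a *: x + y) = a * f x + f y) /\
  (exists M : R, forall x, `|f x| <= M * nrm x).

Definition Jset (z : V) : set (V -> R) :=
  [set f | is_dual f /\ fnorm f = 1 /\ f z = nrm z].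

Definition smooth_elt (z : V) : Prop := exists f, Jset z = [set f].

Definition eps_smooth_elt (eps : R) (z : V) : Prop :=
  sup [set fnorm (fun x => f x - g x) | f in Jset z & g in Jset z] <= eps.

Definition approx_smooth_elt (z : V) : Prop :=
  exists eps : R, 0 <= eps < 2 /\ eps_smooth_elt eps z.

Definition smooth_space : Prop := forall z : V, nrm z = 1 -> smooth_elt z.

Definition approx_smooth_space : Prop :=
  exists eps : R, 0 <= eps < 2 /\ forall z : V, nrm z = 1 -> eps_smooth_elt eps z.

End Smoothness.

(* L(l_1^n, Y): a linear operator T : R^n -> Y is represented by the
   n-tuple of its values on the standard basis, T = (y_i)_i, acting as
   x |-> sum_i x_i y_i. *)
Definition l1norm (R : realType) (n : nat) (x : 'I_n -> R) : R :=
  \sum_(i < n) `|x i|.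

Definition op_apply (R : realType) (Y : normedModType R) (n : nat)
  (T : {ffun 'I_n -> Y}) (x : 'I_n -> R) : Y := \sum_(i < n) x i *: T i.

Definition opnorm_l1 (R : realType) (Y : normedModType R) (n : nat)
  (T : {ffun 'I_n -> Y}) : R :=
  sup [set `|op_apply T x| | x in [set x : 'I_n -> R | l1norm x <= 1]].

(* Main.v *)
Require Import Defs.
From HB Require Import structures.
From mathcomp Require Import all_boot all_order all_algebra.
From mathcomp Require Import all_classical all_reals all_analysis.
Import Order.TTheory GRing.Theory Num.Theory.
Import numFieldNormedType.Exports.
Set Implicit Arguments. Unset Strict Implicit.
Local Open Scope classical_set_scope.
Local Open Scope ring_scope.

Section Op.
Variables (R : realType) (Y : normedModType R) (n : nat).
Implicit Types (S : {ffun 'I_n -> Y}).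

Lemma l1_coord (x : 'I_n -> R) j : `|x j| <= l1norm x.
Proof.
rewrite /l1norm (bigD1 j) //= lerDl; exact: sumr_ge0.
Qed.

Lemma op_apply_le S (x : 'I_n -> R) c : 0 <= c -> (forall i, `|S i| <= c) ->
  l1norm x <= 1 -> `|op_apply S x| <= c.
Proof.
move=> c0 Hc Hx; rewrite /op_apply.
apply: (le_trans (ler_norm_sum _ _ _)).
apply: (@le_trans _ _ (\sum_(i < n) `|x i| * c)).
  apply: ler_sum => i _; rewrite normrZ; apply: ler_wpM2l => //.
rewrite -mulr_suml -/(l1norm x) -[leRHS]mul1r; exact: ler_wpM2r.
Qed.

Lemma opnorm_le S c : 0 <= c -> (forall i, `|S i| <= c) -> opnorm_l1 S <= c.
Proof.
move=> c0 Hc; apply: ge_sup.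
  exists 0, 0 => //=; last by rewrite /op_apply big1 ?normr0 // => i _; rewrite scale0r.
  by rewrite /l1norm big1 // => i _; rewrite normr0.
by move=> _ [x Hx <-]; exact: op_apply_le.
Qed.

Lemma opnorm_ge S i : `|S i| <= opnorm_l1 S.
Proof.
apply: ub_le_sup.
  exists (\sum_(j < n) `|S j|) => _ [x Hx <-].
  apply: op_apply_le => //; first exact: sumr_ge0.
  by move=> j; rewrite (bigD1 j) //= lerDl; exact: sumr_ge0.
exists (fun j => if j == i then 1 else 0).
  rewrite /= /l1norm (bigD1 i) //= eqxx normr1 big1 ?addr0 // => j /negbTE ->.
  by rewrite normr0.
rewrite /= /op_apply (bigD1 i) //= eqxx scale1r big1 ?addr0 // => j /negbTE ->.
by rewrite scale0r.
Qed.

End Op.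

Section FN.
Variables (R : realType) (V : lmodType R) (nrm : V -> R).

Lemma dual0 f : is_dual nrm f -> f 0 = 0.
Proof.
move=> [Hl _]; have := Hl 1 0 0; rewrite scale1r addr0 mul1r => H.
by apply: (@addrI _ (f 0)); rewrite addr0 -H.
Qed.

Lemma dualD f x y : is_dual nrm f -> f (x + y) = f x + f y.
Proof. by move=> [Hl _]; have := Hl 1 x y; rewrite scale1r mul1r. Qed.

Lemma dualZ f a x : is_dual nrm f -> f (a *: x) = a * f x.
Proof. by move=> Hf; rewrite -[a *: x]addr0 Hf.1 (dual0 Hf) addr0. Qed.

Lemma fnorm_ub f x : is_dual nrm f -> (forall y, 0 <= nrm y) -> nrm x <= 1 ->
  `|f x| <= fnorm nrm f.
Proof.
move=> [_ [M HM]] Hpos Hx; apply: ub_le_sup; last by exists x.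
exists `|M| => _ [y Hy <-]; apply: (le_trans (HM y)).
apply: (le_trans (ler_norm _)) => /=; rewrite normrM (ger0_norm (Hpos y)).
by rewrite -[leRHS]mulr1; apply: ler_wpM2l.
Qed.

Lemma fnorm_le f c : (exists x0, nrm x0 <= 1) ->
  (forall x, nrm x <= 1 -> `|f x| <= c) -> fnorm nrm f <= c.
Proof.
move=> [x0 H0] Hc; apply: ge_sup; first by exists `|f x0|, x0.
by move=> _ [x Hx <-]; exact: Hc.
Qed.
End FN.

Section Main.
Variables (R : realType) (Y : normedModType R) (n' : nat).
Local Notation n := n'.+1.
Local Notation V := {ffun 'I_n -> Y}.
Local Notation N := (@opnorm_l1 R Y n).

Definition emb (y : Y) : V := [ffun i => if i == ord0 then y else 0].
Definition ext (h : Y -> R) : V -> R := fun S => h (S ord0).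
Definition res (f : V -> R) : Y -> R := fun y => f (emb y).

Lemma N_ge0 S : 0 <= N S.
Proof. exact: le_trans (normr_ge0 _) (opnorm_ge S ord0). Qed.

Lemma N_emb y : N (emb y) = `|y|.
Proof.
apply/eqP; rewrite eq_le; apply/andP; split.
  apply: opnorm_le => // i; rewrite ffunE; case: eqP => _ //.
  by rewrite normr0.
by have := opnorm_ge (emb y) ord0; rewrite ffunE eqxx.
Qed.

Lemma fnorm_ext h : fnorm N (ext h) = fnorm (@Num.norm R Y) h.
Proof.
rewrite /fnorm; congr sup; apply/seteqP; split.
  move=> _ [S HS <-]; exists (S ord0) => //=.
  exact: le_trans (opnorm_ge S ord0) HS.
move=> _ [y Hy <-]; exists (emb y); first by rewrite /= N_emb.
by rewrite /ext ffunE eqxx.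
Qed.

Lemma ext_J (z : Y) phi : `|z| = 1 -> Jset (@Num.norm R Y) z phi ->
  Jset N (emb z) (ext phi).
Proof.
move=> z1 [[Hl [M HM]] [Hn Hv]]; split; last split.
- split.
    by move=> a x y; rewrite /ext !ffunE Hl.
  exists `|M| => S; rewrite /ext; apply: (le_trans (HM _)).
  apply: (le_trans (ler_norm _)); rewrite normrM normr_id.
  by apply: ler_wpM2l => //; exact: opnorm_ge.
- by rewrite fnorm_ext.
- by rewrite /ext ffunE eqxx Hv N_emb.
Qed.

Lemma res_J (z : Y) f : `|z| = 1 -> Jset N (emb z) f ->
  (forall S, f S = res f (S ord0)) /\ Jset (@Num.norm R Y) z (res f).
Proof.
move=> z1 [Hd [Hn Hv]].
have NT : N (emb z) = 1 by rewrite N_emb.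
have fT : f (emb z) = 1 by rewrite Hv NT.
have dec : forall S, f S = res f (S ord0).
  move=> S; pose r := [ffun i => if i == ord0 then 0 else S i] : V.
  have -> : S = emb (S ord0) + r.
    by apply/ffunP => i; rewrite !ffunE; case: eqP => [->|]; rewrite ?addr0 ?add0r.
  rewrite (dualD _ _ Hd) {2}/r !ffunE eqxx addr0.
  suff -> : f r = 0 by rewrite addr0.
  pose t := (1 + \sum_(i < n) `|S i|)^-1.
  have sge0 : 0 <= \sum_(i < n) `|S i| by apply: sumr_ge0.
  have t0 : 0 < t by rewrite invr_gt0; exact: ltr_pwDl.
  have key : forall s : R, `|s| <= 1 -> s * t * f r <= 0.
    move=> s s1.
    have HN : N (emb z + (s * t) *: r) <= 1.
      apply: opnorm_le => // i; rewrite !ffunE; case: eqP => _.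
        by rewrite scaler0 addr0 z1.
      rewrite add0r normrZ normrM (gtr0_norm t0).
      apply: (@le_trans _ _ (t * `|S i|)).
        rewrite -mulrA -[leRHS]mul1r; apply: ler_wpM2r => //.
        by rewrite mulr_ge0 // ltW.
      rewrite /t -[leRHS](@mulVf _ (1 + \sum_(i < n) `|S i|)); last first.
        by rewrite gt_eqF // ltr_pwDl.
      apply: ler_wpM2l; first by rewrite invr_ge0 addr_ge0.
      rewrite (bigD1 i) //= addrA.
      by rewrite -addrA addrC -addrA lerDl addr_ge0 // sumr_ge0.
    have := fnorm_ub Hd N_ge0 HN; rewrite Hn (dualD _ _ Hd) (dualZ _ _ Hd) fT.
    by move=> /(le_trans (ler_norm _)); rewrite gerDl.
  have k1 : 1 * t * f r <= 0 by apply: key; rewrite normr1.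
  have k2 : (-1) * t * f r <= 0 by apply: key; rewrite normrN normr1.
  rewrite mul1r pmulr_rle0 // in k1.
  rewrite mulN1r mulNr oppr_le0 pmulr_rge0 // in k2.
  by apply/eqP; rewrite eq_le k1 k2.
split => //.
have embL : forall a x y, emb (a *: x + y) = a *: emb x + emb y.
  by move=> a x y; apply/ffunP => i; rewrite !ffunE; case: eqP => _; rewrite ?scaler0 ?addr0.
split; last split.
- split; first by move=> a x y; rewrite /res embL Hd.1.
  case: Hd.2 => M HM; exists `|M| => y; rewrite /res.
  apply: (le_trans (HM _)); apply: (le_trans (ler_norm _)).
  by rewrite normrM N_emb (ger0_norm (normr_ge0 y)).
- rewrite -fnorm_ext -Hn; congr fnorm; apply: funext => S; by rewrite dec.
- by rewrite /res fT z1.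
Qed.

End Main.

Theorem theorem3p6 (R : realType) (Y : normedModType R) (n : nat) :
  (0 < n)%N ->
  (forall T : {ffun 'I_n -> Y}, T != 0 ->
     approx_smooth_elt (@opnorm_l1 R Y n) T -> smooth_elt (@opnorm_l1 R Y n) T) ->
  smooth_space (@Num.norm R Y) \/ ~ approx_smooth_space (@Num.norm R Y).
Proof.
case: n => // n' _ Hyp.
case: (pselect (approx_smooth_space (@Num.norm R Y))); last by right.
move=> [eps [Heps Hz]]; left => z z1.
have Tnz : emb n' z != 0.
  apply/eqP => E; have := congr1 (fun T : {ffun 'I_n'.+1 -> Y} => T ord0) E.
  rewrite /= !ffunE eqxx => z0.
  by move: z1; rewrite z0 normr0 => /eqP; rewrite eq_sym oner_eq0.
have ap : approx_smooth_elt (@opnorm_l1 R Y n'.+1) (emb n' z).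
  exists eps; split => //; rewrite /eps_smooth_elt.
  suff -> : [set fnorm (@opnorm_l1 R Y n'.+1) (fun x => f x - g x) |
               f in Jset (@opnorm_l1 R Y n'.+1) (emb n' z) &
               g in Jset (@opnorm_l1 R Y n'.+1) (emb n' z)] =
            [set fnorm (@Num.norm R Y) (fun x => f x - g x) |
               f in Jset (@Num.norm R Y) z & g in Jset (@Num.norm R Y) z].
    exact: Hz.
  apply/seteqP; split.
    move=> _ [f Hf [g Hg <-]].
    have [ef Jf] := res_J z1 Hf; have [eg Jg] := res_J z1 Hg.
    exists (res f) => //; exists (res g) => //.
    rewrite -(@fnorm_ext _ _ n'); congr fnorm; apply: funext => S.
    by rewrite /ext ef eg.
  move=> _ [f Hf [g Hg <-]].
  exists (@ext _ _ n' f); first exact: ext_J.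
  exists (@ext _ _ n' g); first exact: ext_J.
  by rewrite -(@fnorm_ext _ _ n').
have [f0 Hf0] := Hyp _ Tnz ap.
have Jf0 : Jset (@opnorm_l1 R Y n'.+1) (emb n' z) f0 by rewrite Hf0.
exists (res f0); apply/seteqP; split.
  move=> phi Hphi; have := @ext_J _ _ n' _ _ z1 Hphi; rewrite Hf0 => E.
  rewrite /= -E; apply: funext => y; by rewrite /res /ext ffunE eqxx.
by move=> _ ->; exact: (res_J z1 Jf0).2.
Qed.
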